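(* There exist uncountably many pairwise non-isomorphic subgroups of $\mathrm{IET}$ that are generated by $3$ elements and are solvable of derived length exactly $3$.
   Context: $\mathrm{IET}$ denotes the group of interval exchange transformations of $[0,1)$: bijections of $[0,1)$ that are orientation-preserving piecewise isometries (piecewise translations), left-continuous, with finitely many discontinuity points. *)

(* Defs.v *)
From Stdlib Require Import Reals.
Open Scope R_scope.

Definition I01 : Type := { x : R | 0 <= x < 1 }.

Definition idI : I01 -> I01 := fun x => x.
Definition compI (f g : I01 -> I01) : I01 -> I01 := fun x => f (g x).

Definition is_IET (f : I01 -> I01) : Prop :=
  (exists g : I01 -> I01, (forall x, g (f x) = x) /\ (forall y, f (g y) = y)) /\
  exists (n : nat) (a t : nat -> R),
    a 0%nat = 0 /\ a n = 1 /\
    (forall i, (i < n)%nat -> a i < a (S i)) /\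
    (forall (x : I01) i, (i < n)%nat -> a i <= proj1_sig x < a (S i) ->
        proj1_sig (f x) = proj1_sig x + t i).

Definition fset := (I01 -> I01) -> Prop.

Inductive gen (S : fset) : fset :=
  | gen_base : forall f, S f -> gen S f
  | gen_id : gen S idI
  | gen_comp : forall f g, gen S f -> gen S g -> gen S (compI f g)
  | gen_inv : forall f h, gen S f -> compI h f = idI -> compI f h = idI -> gen S h.

Definition commutators (G : fset) : fset :=
  fun c => exists a b a' b', G a /\ G b /\
    compI a a' = idI /\ compI a' a = idI /\
    compI b b' = idI /\ compI b' b = idI /\
    c = compI a (compI b (compI a' b')).

Fixpoint derived (G : fset) (k : nat) : fset :=
  match k with
  | O => G
  | S k' => gen (commutators (derived G k'))
  end.

Definition trivial_set (G : fset) : Prop := forall f, G f <-> f = idI.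

Definition derived_length_eq (G : fset) (k : nat) : Prop :=
  trivial_set (derived G k) /\
  forall j, (j < k)%nat -> ~ trivial_set (derived G j).

Definition group_iso (G H : fset) : Prop :=
  exists phi : (I01 -> I01) -> (I01 -> I01),
    (forall f, G f -> H (phi f)) /\
    (forall f g, G f -> G g -> phi (compI f g) = compI (phi f) (phi g)) /\
    (forall f g, G f -> G g -> phi f = phi g -> f = g) /\
    (forall h, H h -> exists f, G f /\ phi f = h).

Definition IET_3gen (G : fset) : Prop :=
  exists g1 g2 g3, is_IET g1 /\ is_IET g2 /\ is_IET g3 /\
    forall f, G f <-> gen (fun h => h = g1 \/ h = g2 \/ h = g3) f.

Definition uncountable (J : Type) : Prop :=
  ~ exists e : J -> nat, forall x y, e x = e y -> x = y.

(* Main.v *)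
Require Import Defs.
From Stdlib Require Import Reals Lra Lia ZArith Arith.
From Stdlib Require Import FunctionalExtensionality ProofIrrelevance ClassicalEpsilon Classical.
Open Scope R_scope.

Definition fr := frac_part.

Lemma fr_range y : 0 <= fr y < 1.
Proof. destruct (base_fp y); unfold fr; lra. Qed.

Lemma fr_char y k : 0 <= y - IZR k < 1 -> fr y = y - IZR k.
Proof.
  intros H. unfold fr, frac_part, Int_part.
  assert (E : (k + 1)%Z = up y).
  { apply tech_up; rewrite plus_IZR; simpl; lra. }
  rewrite <- E. replace (k + 1 - 1)%Z with k by ring. reflexivity.
Qed.

Lemma fr_subZ z n : fr (z - IZR n) = fr z.
Proof.
  assert (H := fr_range z).
  rewrite (fr_char _ (Int_part z - n)).
  - unfold fr, frac_part. rewrite minus_IZR. ring.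
  - unfold fr, frac_part in H. rewrite minus_IZR. lra.
Qed.

Lemma fr_addZ z n : fr (z + IZR n) = fr z.
Proof.
  replace (z + IZR n) with (z - IZR (- n)) by (rewrite opp_IZR; ring).
  apply fr_subZ.
Qed.

Lemma fr_shift y c : fr (fr y + c) = fr (y + c).
Proof.
  unfold fr at 2. unfold frac_part.
  replace (y - IZR (Int_part y) + c) with (y + c - IZR (Int_part y)) by ring.
  apply fr_subZ.
Qed.

Lemma fr_id y : 0 <= y < 1 -> fr y = y.
Proof. intros H. rewrite (fr_char y 0); simpl; lra. Qed.

Inductive P3 := pe | t01 | t02 | t12 | cy1 | cy2.

Definition ap (p : P3) (i : nat) : nat :=
  match p, i with
  | pe, _ => i
  | t01, 0%nat => 1%nat | t01, 1%nat => 0%nat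
  | t02, 0%nat => 2%nat | t02, 2%nat => 0%nat
  | t12, 1%nat => 2%nat | t12, 2%nat => 1%nat
  | cy1, 0%nat => 1%nat | cy1, 1%nat => 2%nat | cy1, 2%nat => 0%nat
  | cy2, 0%nat => 2%nat | cy2, 1%nat => 0%nat | cy2, 2%nat => 1%nat
  | _, _ => i
  end.

Definition of_im (x y : nat) : P3 :=
  match x, y with
  | 0%nat, 1%nat => pe | 1%nat, 0%nat => t01 | 2%nat, 1%nat => t02
  | 0%nat, 2%nat => t12 | 1%nat, 2%nat => cy1 | 2%nat, 0%nat => cy2
  | _, _ => pe end.

Definition mul p q := of_im (ap p (ap q 0)) (ap p (ap q 1)).
Definition inv p := match p with cy1 => cy2 | cy2 => cy1 | _ => p end.
Definition even p := match p with pe | cy1 | cy2 => true | _ => false end.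

Lemma ap_mul p q i : ap (mul p q) i = ap p (ap q i).
Proof. destruct p, q; do 3 (destruct i as [|i]; try reflexivity). Qed.
Lemma ap_lt p i : (i < 3)%nat -> (ap p i < 3)%nat.
Proof. intros; destruct p; do 3 (destruct i as [|i]; simpl; try lia). Qed.
Lemma mul_e_l p : mul pe p = p. Proof. destruct p; reflexivity. Qed.
Lemma mul_e_r p : mul p pe = p. Proof. destruct p; reflexivity. Qed.
Lemma mul_inv_l p : mul (inv p) p = pe. Proof. destruct p; reflexivity. Qed.
Lemma mul_inv_r p : mul p (inv p) = pe. Proof. destruct p; reflexivity. Qed.
Lemma mul_assoc p q r : mul p (mul q r) = mul (mul p q) r.
Proof. destruct p, q, r; reflexivity. Qed.
Lemma comm_even p q : even (mul p (mul q (mul (inv p) (inv q)))) = true.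
Proof. destruct p, q; reflexivity. Qed.
Lemma even_comm p q : even p = true -> even q = true -> mul p q = mul q p.
Proof. destruct p, q; simpl; intros; try reflexivity; discriminate. Qed.
Lemma even_mul p q : even p = true -> even q = true -> even (mul p q) = true.
Proof. destruct p, q; simpl; intros; try reflexivity; discriminate. Qed.
Lemma even_inv p : even p = true -> even (inv p) = true.
Proof. destruct p; simpl; intros; try reflexivity; discriminate. Qed.
Lemma nontriv_ap p : p <> pe -> exists i, (i < 3)%nat /\ ap p i <> i.
Proof.
  destruct p; intros H; try congruence;
  [exists 0%nat | exists 0%nat | exists 1%nat | exists 0%nat | exists 0%nat];
  simpl; split; lia.
Qed.
From Stdlib Require Import Reals Lra Lia ZArith Arith.
From Stdlib Require Import FunctionalExtensionality ProofIrrelevance ClassicalEpsilon Classical.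
Open Scope R_scope.

Lemma I01_eq (p q : I01) : proj1_sig p = proj1_sig q -> p = q.
Proof.
  destruct p as [x hx], q as [y hy]; simpl; intros ->.
  f_equal; apply proof_irrelevance.
Qed.

Definition sh (v : R) : nat :=
  if Rlt_dec v (1/3) then 0%nat else if Rlt_dec v (2/3) then 1%nat else 2%nat.
Definition sp (p : I01) : nat := sh (proj1_sig p).
Definition xc (p : I01) : R := 3 * proj1_sig p - INR (sp p).

Lemma sp_lt p : (sp p < 3)%nat.
Proof. unfold sp, sh. destruct Rlt_dec; [lia|]. destruct Rlt_dec; lia. Qed.

Lemma xc_range p : 0 <= xc p < 1.
Proof.
  unfold xc, sp, sh. destruct p as [v hv]; simpl.
  destruct Rlt_dec; [simpl; lra|]. destruct Rlt_dec; simpl; lra.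
Qed.

Lemma INR_min2 k : 0 <= INR (Nat.min k 2) <= 2.
Proof.
  split; [apply pos_INR|]. replace 2 with (INR 2) by (simpl; lra).
  apply le_INR; lia.
Qed.

Definition ptv (y : R) (k : nat) : R := (fr y + INR (Nat.min k 2)) / 3.
Lemma ptv_ok y k : 0 <= ptv y k < 1.
Proof. unfold ptv. pose proof (fr_range y). pose proof (INR_min2 k). lra. Qed.
Definition pt (y : R) (k : nat) : I01 := exist _ (ptv y k) (ptv_ok y k).

Lemma dec_sh y k : 0 <= y < 1 -> (k < 3)%nat -> sh ((y + INR k) / 3) = k.
Proof.
  intros Hy Hk. unfold sh.
  destruct k as [|[|[|k]]]; simpl;
  repeat (destruct Rlt_dec; try lra); try reflexivity; lia.
Qed.

Lemma sp_pt y k : (k < 3)%nat -> sp (pt y k) = k.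
Proof.
  intros Hk. unfold sp, pt; simpl. unfold ptv.
  replace (Nat.min k 2) with k by lia. apply dec_sh; auto. apply fr_range.
Qed.

Lemma xc_pt y k : (k < 3)%nat -> xc (pt y k) = fr y.
Proof.
  intros Hk. unfold xc. rewrite sp_pt by auto. unfold pt; simpl; unfold ptv.
  replace (Nat.min k 2) with k by lia. field.
Qed.

Lemma pt_xc p : pt (xc p) (sp p) = p.
Proof.
  apply I01_eq. unfold pt; simpl; unfold ptv.
  rewrite fr_id by apply xc_range. pose proof (sp_lt p).
  replace (Nat.min (sp p) 2) with (sp p) by lia. unfold xc. field.
Qed.

Lemma pt_eq y y' k k' : fr y = fr y' -> k = k' -> pt y k = pt y' k'.
Proof. intros H1 H2; apply I01_eq; unfold pt; simpl; unfold ptv; rewrite H1, H2; auto. Qed.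

Definition T (c : R) (s : R -> P3) : I01 -> I01 :=
  fun p => pt (xc p + c) (ap (s (xc p)) (sp p)).

Lemma T_comp c s d t :
  compI (T c s) (T d t) = T (d + c) (fun x => mul (s (fr (x + d))) (t x)).
Proof.
  apply functional_extensionality; intro p. unfold compI, T.
  assert (Hk : (ap (t (xc p)) (sp p) < 3)%nat) by (apply ap_lt, sp_lt).
  rewrite sp_pt, xc_pt by auto.
  apply pt_eq.
  - rewrite fr_shift. f_equal; ring.
  - rewrite ap_mul. reflexivity.
Qed.

Lemma T_ext c c' s s' : c = c' -> (forall x, 0 <= x < 1 -> s x = s' x) -> T c s = T c' s'.
Proof.
  intros -> H. apply functional_extensionality; intro p. unfold T.
  rewrite H by apply xc_range. reflexivity.
Qed.

Lemma T_id : T 0 (fun _ => pe) = idI.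
Proof.
  apply functional_extensionality; intro p. unfold T, idI. simpl.
  transitivity (pt (xc p) (sp p)); [|apply pt_xc]. apply pt_eq; auto. f_equal; ring.
Qed.

Definition Tinv c s := T (-c) (fun x => inv (s (fr (x - c)))).

Lemma T_inv_r c s : compI (T c s) (Tinv c s) = idI.
Proof.
  unfold Tinv. rewrite T_comp, <- T_id. apply T_ext; [ring|].
  intros x Hx. unfold Rminus. apply mul_inv_r.
Qed.

Lemma T_inv_l c s : compI (Tinv c s) (T c s) = idI.
Proof.
  unfold Tinv. rewrite T_comp, <- T_id. apply T_ext; [ring|].
  intros x Hx. unfold Rminus. rewrite fr_shift. replace (x + c + - c) with x by ring.
  rewrite fr_id by auto. apply mul_inv_l.
Qed.

Lemma inv_uniq (f h g : I01 -> I01) : compI h f = idI -> compI f g = idI -> h = g.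
Proof.
  intros H1 H2.
  change h with (fun x => h x). change g with (fun x => g x).
  apply functional_extensionality; intro x.
  pose proof (equal_f H2 x) as E2. unfold compI, idI in E2.
  pose proof (equal_f H1 (g x)) as E1. unfold compI, idI in E1.
  rewrite <- E2 at 1. exact E1.
Qed.

Lemma T_nontriv s x : 0 <= x < 1 -> s x <> pe -> T 0 s <> idI.
Proof.
  intros Hx Hs E. destruct (nontriv_ap _ Hs) as [i [Hi Hne]].
  pose proof (equal_f E (pt x i)) as E'. unfold T, idI in E'.
  rewrite sp_pt, xc_pt in E' by auto. rewrite fr_id in E' by auto.
  apply (f_equal (@proj1_sig _ _)) in E'. unfold pt in E'; simpl in E'; unfold ptv in E'.
  rewrite Rplus_0_r, fr_id in E' by auto.
  apply Hne. assert (H3 := ap_lt (s x) i Hi).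
  replace (Nat.min (ap (s x) i) 2) with (ap (s x) i) in E' by lia.
  replace (Nat.min i 2) with i in E' by lia.
  apply INR_eq. lra.
Qed.
From Stdlib Require Import Reals Lra Lia ZArith Arith.
From Stdlib Require Import FunctionalExtensionality ProofIrrelevance ClassicalEpsilon Classical.
Open Scope R_scope.

Definition Grp (X : fset) : Prop :=
  X idI /\ (forall f g, X f -> X g -> X (compI f g)) /\
  (forall f h, X f -> compI h f = idI -> compI f h = idI -> X h).

Lemma gen_sub (S X : fset) : (forall f, S f -> X f) -> Grp X -> forall f, gen S f -> X f.
Proof.
  intros HS [H1 [H2 H3]] f Hf. induction Hf; eauto.
Qed.

Lemma gen_Grp S : Grp (gen S).
Proof. repeat split; [apply gen_id | apply gen_comp | eapply gen_inv]. Qed.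

Lemma comm_sub X : Grp X -> forall f, commutators X f -> X f.
Proof.
  intros [H1 [H2 H3]] f (a & b & a' & b' & Ha & Hb & E1 & E2 & E3 & E4 & ->).
  apply H2; auto. apply H2; auto. apply H2; eauto.
Qed.

Lemma derived_Grp G k : Grp G -> Grp (derived G k).
Proof. intros H; destruct k; simpl; [exact H | apply gen_Grp]. Qed.

Lemma derived_mono G k : Grp G -> forall f, derived G (S k) f -> derived G k f.
Proof.
  intros HG f Hf. simpl in Hf. eapply gen_sub; [| | exact Hf].
  - apply comm_sub, derived_Grp, HG.
  - apply derived_Grp, HG.
Qed.

Definition C0 (f : I01 -> I01) := exists c s, f = T c s.
Definition C1 (f : I01 -> I01) := exists s, f = T 0 s.
Definition C2 (f : I01 -> I01) := exists s, (forall x, even (s x) = true) /\ f = T 0 s.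

Lemma T1comp s t : compI (T 0 s) (T 0 t) = T 0 (fun x => mul (s x) (t x)).
Proof.
  rewrite T_comp. apply T_ext; [ring|]. intros x Hx. rewrite Rplus_0_r, fr_id; auto.
Qed.

Lemma Tinv0 s : Tinv 0 s = T 0 (fun x => inv (s x)).
Proof.
  unfold Tinv. apply T_ext; [ring|]. intros x Hx. unfold Rminus. rewrite Ropp_0, Rplus_0_r, fr_id; auto.
Qed.

Lemma T_inv_eq c s h : compI h (T c s) = idI -> h = Tinv c s.
Proof. intros H. eapply inv_uniq; [exact H | apply T_inv_r]. Qed.

Lemma C0_Grp : Grp C0.
Proof.
  repeat split.
  - exists 0, (fun _ => pe). symmetry; apply T_id.
  - intros f g (c & s & ->) (d & t & ->). rewrite T_comp. do 2 eexists; reflexivity.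
  - intros f h (c & s & ->) H1 H2. rewrite (T_inv_eq _ _ _ H1). unfold Tinv. do 2 eexists; reflexivity.
Qed.

Lemma C1_Grp : Grp C1.
Proof.
  repeat split.
  - exists (fun _ => pe). symmetry; apply T_id.
  - intros f g (s & ->) (t & ->). rewrite T1comp. eexists; reflexivity.
  - intros f h (s & ->) H1 H2. rewrite (T_inv_eq _ _ _ H1), Tinv0. eexists; reflexivity.
Qed.

Lemma C2_Grp : Grp C2.
Proof.
  repeat split.
  - exists (fun _ => pe). split; [reflexivity|]. symmetry; apply T_id.
  - intros f g (s & Hs & ->) (t & Ht & ->). rewrite T1comp. eexists; split; [|reflexivity].
    intros; apply even_mul; auto.
  - intros f h (s & Hs & ->) H1 H2. rewrite (T_inv_eq _ _ _ H1), Tinv0.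
    eexists; split; [|reflexivity]. intros; apply even_inv; auto.
Qed.

Lemma comm0 X : (forall f, X f -> C0 f) -> forall f, commutators X f -> C1 f.
Proof.
  intros HX f (a & b & a' & b' & Ha & Hb & E1 & E2 & E3 & E4 & ->).
  destruct (HX _ Ha) as (c & s & ->). destruct (HX _ Hb) as (d & t & ->).
  rewrite (T_inv_eq _ _ _ E2), (T_inv_eq _ _ _ E4). unfold Tinv. rewrite !T_comp.
  eexists. apply T_ext; [ring|]. intros; reflexivity.
Qed.

Lemma comm_e p q : even p = true -> even q = true -> mul p (mul q (mul (inv p) (inv q))) = pe.
Proof. destruct p, q; simpl; intros; try reflexivity; discriminate. Qed.

Lemma comm1 X : (forall f, X f -> C1 f) -> forall f, commutators X f -> C2 f.
Proof.
  intros HX f (a & b & a' & b' & Ha & Hb & E1 & E2 & E3 & E4 & ->).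
  destruct (HX _ Ha) as (s & ->). destruct (HX _ Hb) as (t & ->).
  rewrite (T_inv_eq _ _ _ E2), (T_inv_eq _ _ _ E4), !Tinv0, !T1comp.
  eexists; split; [|reflexivity]. intros; apply comm_even.
Qed.

Lemma comm2 X : (forall f, X f -> C2 f) -> forall f, commutators X f -> f = idI.
Proof.
  intros HX f (a & b & a' & b' & Ha & Hb & E1 & E2 & E3 & E4 & ->).
  destruct (HX _ Ha) as (s & Hs & ->). destruct (HX _ Hb) as (t & Ht & ->).
  rewrite (T_inv_eq _ _ _ E2), (T_inv_eq _ _ _ E4), !Tinv0, !T1comp.
  rewrite <- T_id. apply T_ext; auto. intros; apply comm_e; auto.
Qed.

Lemma Id_Grp : Grp (fun f => f = idI).
Proof.
  repeat split.
  - intros f g -> ->. reflexivity.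
  - intros f h -> H1 H2. exact H1.
Qed.

Lemma derived3_triv G : (forall f, G f -> C0 f) -> trivial_set (derived G 3).
Proof.
  intros H0 f. split.
  - intros Hf. simpl in Hf.
    refine (gen_sub _ (fun f => f = idI) _ Id_Grp _ Hf).
    apply comm2. intros g Hg. eapply gen_sub; [| apply C2_Grp | exact Hg].
    apply comm1. intros g' Hg'. eapply gen_sub; [| apply C1_Grp | exact Hg'].
    apply comm0. exact H0.
  - intros ->. simpl. apply gen_id.
Qed.
From Stdlib Require Import Reals Lra Lia ZArith Arith.
From Coquelicot Require Import Coquelicot.
Open Scope R_scope.

Definition bv (x : bool) : R := if x then 1 else 0.
Definition term (b : nat -> bool) (m j : nat) : R := bv (b (m + j)%nat) * (/8) ^ (S j).
Definition A (b : nat -> bool) (m : nat) : R := Series (term b m).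

Lemma bv_range x : 0 <= bv x <= 1.
Proof. destruct x; simpl; lra. Qed.

Lemma geom_ex : ex_series (fun j => (/8) ^ (S j)).
Proof.
  exists (/8 * / (1 - /8)).
  apply (is_series_scal_l (/8) (fun n => (/8)^n)).
  apply is_series_geom. rewrite Rabs_pos_eq; lra.
Qed.

Lemma geom_val : Series (fun j => (/8) ^ (S j)) = 1/7.
Proof.
  apply is_series_unique.
  replace (1/7) with (/8 * / (1 - /8)) by field.
  apply (is_series_scal_l (/8) (fun n => (/8)^n)).
  apply is_series_geom. rewrite Rabs_pos_eq; lra.
Qed.

Lemma term_bound b m j : 0 <= term b m j <= (/8) ^ (S j).
Proof.
  unfold term. pose proof (bv_range (b (m + j)%nat)).
  assert (0 <= (/8) ^ (S j)) by (apply pow_le; lra).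
  split; [apply Rmult_le_pos; lra|]. nra.
Qed.

Lemma term_ex b m : ex_series (term b m).
Proof.
  apply (@ex_series_le R_AbsRing R_CompleteNormedModule _ (fun j => (/8) ^ (S j))); [|apply geom_ex].
  intros n. change (norm (term b m n)) with (Rabs (term b m n)).
  pose proof (term_bound b m n). rewrite Rabs_pos_eq; lra.
Qed.

Lemma A_bounds b m : 0 <= A b m <= 1/7.
Proof.
  split.
  - replace 0 with (Series (fun n => 0 * term b m n)).
    + apply Series_le; [|apply term_ex]. intros n. pose proof (term_bound b m n). lra.
    + rewrite Series_scal_l. ring.
  - rewrite <- geom_val. apply Series_le; [apply term_bound | apply geom_ex].
Qed.

Lemma A_rec b m : A b m = bv (b m) / 8 + A b (S m) / 8.
Proof.
  unfold A. rewrite Series_incr_1 by apply term_ex.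
  unfold term at 1. rewrite Nat.add_0_r. simpl pow. rewrite Rmult_1_r.
  replace (Series (fun k => term b m (S k))) with (Series (fun k => /8 * term b (S m) k)).
  - rewrite Series_scal_l. field.
  - apply Series_ext. intros k. unfold term. rewrite Nat.add_succ_r. simpl. ring.
Qed.

Definition alpha (b : nat -> bool) : R := /8 + A b 0 / 8.

Lemma alpha_range b : 1/8 <= alpha b <= 1/8 + 1/56.
Proof. unfold alpha. pose proof (A_bounds b 0). lra. Qed.

Lemma A_int b m : exists z : Z, 8 ^ m * A b 0 = IZR z + A b m.
Proof.
  induction m as [|m [z Hz]].
  - exists 0%Z. simpl. ring.
  - exists (8 * z + (if b m then 1 else 0))%Z.
    rewrite plus_IZR, mult_IZR. simpl pow. rewrite Rmult_assoc, Hz.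
    rewrite (A_rec b m). destruct (b m); simpl; field.
Qed.

Lemma alpha_frac b m : fr (INR (8 ^ (S m)) * alpha b) = A b m.
Proof.
  destruct (A_int b m) as [z Hz].
  assert (E : INR (8 ^ (S m)) * alpha b = IZR (Z.of_nat (8 ^ m) + z) + A b m).
  { rewrite plus_IZR, <- INR_IZR_INZ, Rplus_assoc, <- Hz, !pow_INR.
    replace (INR 8) with 8 by (simpl; ring). unfold alpha. simpl pow. field. }
  rewrite E. pose proof (A_bounds b m).
  rewrite (fr_char _ (Z.of_nat (8 ^ m) + z)); [ring | lra].
Qed.

Lemma A_false b m : b m = false -> 0 <= A b m <= 1/56.
Proof. intros H. rewrite A_rec, H. pose proof (A_bounds b (S m)). simpl. lra. Qed.

Lemma A_true b m : b m = true -> 1/8 <= A b m <= 1/8 + 1/56.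
Proof. intros H. rewrite A_rec, H. pose proof (A_bounds b (S m)). simpl. lra. Qed.
From Stdlib Require Import Reals Lra Lia ZArith Arith.
From Stdlib Require Import FunctionalExtensionality.
Open Scope R_scope.

Lemma T_val c s p : proj1_sig (T c s p) =
  (fr (3 * proj1_sig p - INR (sh (proj1_sig p)) + c) +
   INR (ap (s (3 * proj1_sig p - INR (sh (proj1_sig p)))) (sh (proj1_sig p)))) / 3.
Proof.
  unfold T, pt; simpl; unfold ptv. pose proof (ap_lt (s (xc p)) (sp p) (sp_lt p)).
  replace (Nat.min (ap (s (xc p)) (sp p)) 2) with (ap (s (xc p)) (sp p)) by lia.
  reflexivity.
Qed.

Definition sa (x : R) : P3 := if Rlt_dec x (1/16) then t01 else pe.
Definition sc (x : R) : P3 := if Rlt_dec x (1/16) then t12 else pe.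
Definition ga := T 0 sa.
Definition gc := T 0 sc.
Definition ra b := T (alpha b) (fun _ => pe).
Definition ri b := T (- alpha b) (fun _ => pe).

Lemma ri_eq b : ri b = Tinv (alpha b) (fun _ => pe).
Proof. unfold ri, Tinv. apply T_ext; auto. Qed.
Lemma ra_ri b : compI (ra b) (ri b) = idI.
Proof. rewrite ri_eq. apply T_inv_r. Qed.
Lemma ri_ra b : compI (ri b) (ra b) = idI.
Proof. rewrite ri_eq. apply T_inv_l. Qed.
Lemma ga_ga : compI ga ga = idI.
Proof. unfold ga. rewrite T1comp, <- T_id. apply T_ext; auto. intros; unfold sa; destruct Rlt_dec; reflexivity. Qed.
Lemma gc_gc : compI gc gc = idI.
Proof. unfold gc. rewrite T1comp, <- T_id. apply T_ext; auto. intros; unfold sc; destruct Rlt_dec; reflexivity. Qed.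

Lemma bij_of f g : compI g f = idI -> compI f g = idI ->
  exists g, (forall x, g (f x) = x) /\ (forall y, f (g y) = y).
Proof.
  intros H1 H2. exists g. split; intros x; [exact (equal_f H1 x) | exact (equal_f H2 x)].
Qed.

Ltac piece :=
  rewrite T_val;
  match goal with x : I01 |- _ => destruct x as [? ?] end; simpl proj1_sig in *;
  unfold sh; try unfold sa; try unfold sc;
  repeat (destruct Rlt_dec; simpl INR in *; try (exfalso; lra));
  simpl ap; simpl INR;
  first [rewrite fr_id by lra | (rewrite (fr_char _ 1); [|simpl; lra]); simpl];
  field.

Lemma ga_IET : is_IET ga.
Proof.
  split; [apply (bij_of _ ga); apply ga_ga|].
  exists 4%nat, (fun i => match i with 0%nat => 0 | 1%nat => 1/48 | 2%nat => 1/3 | 3%nat => 1/3 + 1/48 | _ => 1 end),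
    (fun i => match i with 0%nat => 1/3 | 2%nat => -1/3 | _ => 0 end).
  split; [reflexivity|]. split; [reflexivity|]. split.
  - intros i Hi. destruct i as [|[|[|[|i]]]]; try lia; lra.
  - intros x i Hi Hx. unfold ga.
    destruct i as [|[|[|[|i]]]]; try lia; piece.
Qed.

Lemma gc_IET : is_IET gc.
Proof.
  split; [apply (bij_of _ gc); apply gc_gc|].
  exists 5%nat, (fun i => match i with 0%nat => 0 | 1%nat => 1/3 | 2%nat => 1/3 + 1/48 | 3%nat => 2/3
                   | 4%nat => 2/3 + 1/48 | _ => 1 end),
    (fun i => match i with 1%nat => 1/3 | 3%nat => -1/3 | _ => 0 end).
  split; [reflexivity|]. split; [reflexivity|]. split.
  - intros i Hi. destruct i as [|[|[|[|[|i]]]]]; try lia; lra.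
  - intros x i Hi Hx. unfold gc.
    destruct i as [|[|[|[|[|i]]]]]; try lia; piece.
Qed.

Lemma ra_IET b : is_IET (ra b).
Proof.
  split; [apply (bij_of _ (ri b)); [apply ri_ra | apply ra_ri]|].
  pose proof (alpha_range b). set (al := alpha b) in *.
  exists 6%nat, (fun i => match i with 0%nat => 0 | 1%nat => (1 - al)/3 | 2%nat => 1/3 | 3%nat => (2 - al)/3
                   | 4%nat => 2/3 | 5%nat => (3 - al)/3 | _ => 1 end),
    (fun i => match i with 0%nat | 2%nat | 4%nat => al/3 | _ => (al - 1)/3 end).
  split; [reflexivity|]. split; [reflexivity|]. split.
  - intros i Hi. destruct i as [|[|[|[|[|[|i]]]]]]; try lia; lra.
  - intros x i Hi Hx. unfold ra. fold al.
    destruct i as [|[|[|[|[|[|i]]]]]]; try lia; piece.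
Qed.
From Stdlib Require Import Reals Lra Lia ZArith Arith.
From Stdlib Require Import FunctionalExtensionality.
Open Scope R_scope.

Inductive W := Lt (n : nat) | Cm (u v : W).

Definition gens b (n : nat) : I01 -> I01 :=
  match n with 1%nat => ra b | 2%nat => ri b | 3%nat => ga | 4%nat => gc | _ => idI end.

Fixpoint ev b (w : W) : I01 -> I01 :=
  match w with Lt n => gens b n | Cm u v => compI (ev b u) (ev b v) end.

Fixpoint winv (w : W) : W :=
  match w with
  | Lt 1%nat => Lt 2 | Lt 2%nat => Lt 1 | Lt n => Lt n
  | Cm u v => Cm (winv v) (winv u) end.

Lemma ev_winv b w : compI (ev b (winv w)) (ev b w) = idI /\ compI (ev b w) (ev b (winv w)) = idI.
Proof.
  induction w as [n | u [IHu1 IHu2] v [IHv1 IHv2]].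
  - destruct n as [|[|[|[|[|n]]]]]; simpl;
      auto using ri_ra, ra_ri, ga_ga, gc_gc.
  - simpl. split; apply functional_extensionality; intros x; unfold compI, idI.
    + pose proof (equal_f IHu1 (ev b v x)) as E; unfold compI, idI in E; rewrite E.
      exact (equal_f IHv1 x).
    + pose proof (equal_f IHv2 (ev b (winv u) x)) as E; unfold compI, idI in E; rewrite E.
      exact (equal_f IHu2 x).
Qed.

Definition Fb b : fset := gen (fun h => h = ra b \/ h = ga \/ h = gc).

Lemma gen_ev b f : Fb b f <-> exists w, ev b w = f.
Proof.
  split.
  - intros H. induction H as [f Hf | | f g _ [u Hu] _ [v Hv] | f h _ [u Hu] H1 H2].
    + destruct Hf as [-> | [-> | ->]]; [exists (Lt 1) | exists (Lt 3) | exists (Lt 4)]; reflexivity.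
    + exists (Lt 0). reflexivity.
    + exists (Cm u v). simpl. congruence.
    + exists (winv u). subst f. destruct (ev_winv b u) as [E1 E2].
      symmetry. eapply inv_uniq; [exact H1 | exact E2].
  - intros [w <-]. induction w as [n | u IHu v IHv].
    + destruct n as [|[|[|[|[|n]]]]]; simpl.
      * apply gen_id.
      * apply gen_base; auto.
      * apply (gen_inv _ (ra b)); [apply gen_base; auto | apply ri_ra | apply ra_ri].
      * apply gen_base; auto.
      * apply gen_base; auto.
      * apply gen_id.
    + simpl. apply gen_comp; auto.
Qed.

Lemma Fb_C0 b f : Fb b f -> C0 f.
Proof.
  intros H. eapply gen_sub; [| apply C0_Grp | exact H].
  intros g [-> | [-> | ->]]; unfold ra, ga, gc; do 2 eexists; reflexivity.
Qed.

Definition s1 x := mul (sa x) (mul (sc x) (mul (sa x) (sc x))).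
Definition s2 b x := mul (sa x) (sa (fr (x - alpha b))).

Lemma y1_eq : compI ga (compI gc (compI ga gc)) = T 0 s1.
Proof. unfold ga, gc. rewrite !T1comp. reflexivity. Qed.

Lemma y2_eq b : compI ga (compI (ra b) (compI ga (ri b))) = T 0 (s2 b).
Proof.
  unfold ga, ra, ri. rewrite !T_comp. apply T_ext; [ring|]. intros x Hx.
  unfold s2. replace (x + (- alpha b + 0 + alpha b)) with x by ring.
  rewrite fr_id by auto. rewrite mul_e_l, !mul_e_r. reflexivity.
Qed.

Lemma T1_inv s : compI (T 0 (fun x => inv (s x))) (T 0 s) = idI /\
                 compI (T 0 s) (T 0 (fun x => inv (s x))) = idI.
Proof.
  rewrite !T1comp, <- T_id. split; apply T_ext; auto; intros; auto using mul_inv_l, mul_inv_r.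
Qed.

Lemma derived2_nontriv b : ~ trivial_set (derived (Fb b) 2).
Proof.
  intros Htr.
  set (y1 := T 0 s1). set (y2 := T 0 (s2 b)).
  assert (H1 : derived (Fb b) 1 y1).
  { simpl. apply gen_base. exists ga, gc, ga, gc.
    repeat split; try apply ga_ga; try apply gc_gc; try (apply gen_base; auto).
    unfold y1; rewrite <- y1_eq; reflexivity. }
  assert (H2 : derived (Fb b) 1 y2).
  { simpl. apply gen_base. exists ga, (ra b), ga, (ri b).
    repeat split; try apply ga_ga; try apply ra_ri; try apply ri_ra; try (apply gen_base; auto).
    unfold y2; rewrite <- y2_eq; reflexivity. }
  assert (H3 : derived (Fb b) 2 (compI y1 (compI y2 (compI (T 0 (fun x => inv (s1 x)))
                                                           (T 0 (fun x => inv (s2 b x))))))).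
  { simpl. apply gen_base. exists y1, y2, (T 0 (fun x => inv (s1 x))), (T 0 (fun x => inv (s2 b x))).
    destruct (T1_inv s1), (T1_inv (s2 b)). repeat split; auto. }
  apply Htr in H3. unfold y1, y2 in H3. rewrite !T1comp in H3.
  revert H3. apply (T_nontriv _ 0); [lra|].
  pose proof (alpha_range b).
  unfold s1, s2, sa, sc.
  rewrite (fr_char _ (-1)); [|simpl; lra].
  repeat (destruct Rlt_dec; try (exfalso; rewrite ?opp_IZR in *; simpl in *; lra)); discriminate.
Qed.

Lemma Fb_length b : derived_length_eq (Fb b) 3.
Proof.
  split.
  - apply derived3_triv. apply Fb_C0.
  - intros j Hj Htr. apply (derived2_nontriv b). intros f. split.
    + intros Hf. apply Htr.
      destruct j as [|[|[|j]]]; try lia.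
      * apply derived_mono; [apply gen_Grp|]. apply derived_mono; [apply gen_Grp|]. exact Hf.
      * apply derived_mono; [apply gen_Grp|]. exact Hf.
      * exact Hf.
    + intros ->. simpl. apply gen_id.
Qed.
From Stdlib Require Import Reals Lra Lia ZArith Arith.
From Stdlib Require Import FunctionalExtensionality.
Open Scope R_scope.

Fixpoint rpow (n : nat) : W := match n with O => Lt 0 | S n => Cm (Lt 1) (rpow n) end.
Fixpoint rpowi (n : nat) : W := match n with O => Lt 0 | S n => Cm (Lt 2) (rpowi n) end.

Lemma ev_rpow b n : ev b (rpow n) = T (INR n * alpha b) (fun _ => pe).
Proof.
  induction n as [|n IH].
  - simpl. rewrite <- T_id. apply T_ext; auto. simpl; ring.
  - simpl ev. rewrite IH. unfold ra. rewrite T_comp. apply T_ext; [rewrite S_INR; ring|].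
    intros; reflexivity.
Qed.

Lemma ev_rpowi b n : ev b (rpowi n) = T (- (INR n * alpha b)) (fun _ => pe).
Proof.
  induction n as [|n IH].
  - simpl. rewrite <- T_id. apply T_ext; auto. simpl; ring.
  - simpl ev. rewrite IH. unfold ri. rewrite T_comp. apply T_ext; [rewrite S_INR; ring|].
    intros; reflexivity.
Qed.

Definition Xw (n : nat) : W := Cm (rpow n) (Cm (Lt 4) (rpowi n)).
Definition wit (m : nat) : W :=
  let X := Xw (8 ^ (S m)) in Cm (Lt 3) (Cm X (Cm (Lt 3) X)).

Definition rho b n x := sc (fr (x - INR n * alpha b)).

Lemma ev_X b n : ev b (Xw n) = T 0 (rho b n).
Proof.
  unfold Xw. simpl ev. rewrite ev_rpow, ev_rpowi. unfold gc. rewrite !T_comp.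
  apply T_ext; [ring|]. intros x Hx. rewrite mul_e_l, !mul_e_r. reflexivity.
Qed.

Lemma ev_wit b m : ev b (wit m) =
  T 0 (fun x => mul (sa x) (mul (rho b (8 ^ S m) x) (mul (sa x) (rho b (8 ^ S m) x)))).
Proof.
  change (ev b (wit m)) with
    (compI ga (compI (ev b (Xw (8 ^ S m))) (compI ga (ev b (Xw (8 ^ S m)))))).
  rewrite ev_X. unfold ga. rewrite !T1comp. reflexivity.
Qed.

Lemma Nalpha b m : exists z, INR (8 ^ S m) * alpha b = IZR z + A b m.
Proof.
  exists (Int_part (INR (8 ^ S m) * alpha b)). rewrite <- (alpha_frac b m).
  unfold fr, frac_part. ring.
Qed.

Lemma wit_true b m : b m = true -> ev b (wit m) = idI.
Proof.
  intros Hb. rewrite ev_wit, <- T_id. apply T_ext; auto. intros x Hx.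
  destruct (Nalpha b m) as [z Hz]. pose proof (A_true b m Hb).
  unfold rho. rewrite Hz.
  replace (x - (IZR z + A b m)) with (x - A b m - IZR z) by ring. rewrite fr_subZ.
  unfold sa. destruct (Rlt_dec x (1/16)).
  - rewrite (fr_char _ (-1)) by (simpl; lra). unfold sc.
    destruct Rlt_dec; [simpl in *; lra|]. reflexivity.
  - unfold sc. destruct Rlt_dec; reflexivity.
Qed.

Lemma wit_false b m : b m = false -> ev b (wit m) <> idI.
Proof.
  intros Hb. rewrite ev_wit. destruct (Nalpha b m) as [z Hz]. pose proof (A_false b m Hb).
  apply (T_nontriv _ (A b m)); [lra|].
  unfold rho. rewrite Hz.
  replace (A b m - (IZR z + A b m)) with (0 - IZR z) by ring. rewrite fr_subZ.
  rewrite fr_id by lra. unfold sa, sc.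
  repeat (destruct Rlt_dec; try lra). discriminate.
Qed.

Lemma kernel_inj b b' : (forall w, ev b w = idI <-> ev b' w = idI) -> b = b'.
Proof.
  intros H. apply functional_extensionality; intros m.
  destruct (b m) eqn:E1, (b' m) eqn:E2; auto.
  - exfalso. apply (wit_false b' m E2). apply H. apply wit_true; auto.
  - exfalso. apply (wit_false b m E1). apply H. apply wit_true; auto.
Qed.
From Stdlib Require Import Reals Lra Lia ZArith Arith Cantor.
From Stdlib Require Import FunctionalExtensionality ProofIrrelevance ClassicalEpsilon Classical.
Open Scope R_scope.

Lemma iso_refl G : group_iso G G.
Proof. exists (fun f => f). repeat split; auto. intros h Hh; exists h; auto. Qed.

Lemma iso_trans G H K : group_iso G H -> group_iso H K -> group_iso G K.
Proof.
  intros (p & p1 & p2 & p3 & p4) (q & q1 & q2 & q3 & q4).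
  exists (fun f => q (p f)). repeat split.
  - auto.
  - intros f g Hf Hg. rewrite p2 by auto. apply q2; auto.
  - intros f g Hf Hg E. apply p3; auto.
  - intros h Hh. destruct (q4 h Hh) as (g & Hg & <-). destruct (p4 g Hg) as (f & Hf & <-).
    eauto.
Qed.

Lemma iso_sym G H : (forall f g, G f -> G g -> G (compI f g)) -> group_iso G H -> group_iso H G.
Proof.
  intros HG (p & p1 & p2 & p3 & p4).
  set (psi := fun h => epsilon (inhabits idI) (fun f => G f /\ p f = h)).
  assert (Hpsi : forall h, H h -> G (psi h) /\ p (psi h) = h).
  { intros h Hh. unfold psi. apply (epsilon_spec (inhabits idI) (fun f => G f /\ p f = h)).
    auto. }
  exists psi. repeat split.
  - intros h Hh. apply Hpsi; auto.
  - intros h1 h2 H1 H2. destruct (Hpsi _ H1) as [G1 E1]. destruct (Hpsi _ H2) as [G2 E2].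
    assert (H12 : H (compI h1 h2)).
    { rewrite <- E1, <- E2, <- p2 by auto. apply p1; auto. }
    destruct (Hpsi _ H12) as [G12 E12].
    apply p3; auto. rewrite E12, p2, E1, E2 by auto. reflexivity.
  - intros h1 h2 H1 H2 E. destruct (Hpsi _ H1) as [_ E1]. destruct (Hpsi _ H2) as [_ E2].
    rewrite <- E1, <- E2, E. reflexivity.
  - intros f Hf. exists (p f). split; [auto|]. destruct (Hpsi (p f) (p1 f Hf)) as [G1 E1].
    apply p3; auto.
Qed.

Fixpoint sb (u1 u2 u3 : W) (w : W) : W :=
  match w with
  | Lt 1%nat => u1 | Lt 2%nat => winv u1 | Lt 3%nat => u2 | Lt 4%nat => u3 | Lt _ => Lt 0
  | Cm u v => Cm (sb u1 u2 u3 u) (sb u1 u2 u3 v) end.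

Lemma ev_in b w : Fb b (ev b w).
Proof. apply gen_ev. eauto. Qed.

Lemma iso_kernel j k : group_iso (Fb j) (Fb k) ->
  exists u1 u2 u3, forall w, ev j w = idI <-> ev k (sb u1 u2 u3 w) = idI.
Proof.
  intros (p & p1 & p2 & p3 & p4).
  destruct (proj1 (gen_ev k _) (p1 (ra j) (ev_in j (Lt 1)))) as [u1 Hu1].
  destruct (proj1 (gen_ev k _) (p1 ga (ev_in j (Lt 3)))) as [u2 Hu2].
  destruct (proj1 (gen_ev k _) (p1 gc (ev_in j (Lt 4)))) as [u3 Hu3].
  assert (Pid : p idI = idI).
  { assert (Hin : Fb k (p idI)) by (apply p1; exact (ev_in j (Lt 0))).
    destruct (proj1 (gen_ev k _) Hin) as [w0 Hw0].
    destruct (ev_winv k w0) as [Ei _]. rewrite Hw0 in Ei.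
    assert (E : p idI = compI (p idI) (p idI)).
    { rewrite <- p2 by exact (ev_in j (Lt 0)). reflexivity. }
    transitivity (compI (compI (ev k (winv w0)) (p idI)) (p idI)).
    - rewrite Ei. reflexivity.
    - change (compI (ev k (winv w0)) (compI (p idI) (p idI)) = idI). rewrite <- E. exact Ei. }
  exists u1, u2, u3.
  assert (Hp : forall w, p (ev j w) = ev k (sb u1 u2 u3 w)).
  { induction w as [n | u IHu v IHv].
    - destruct n as [|[|[|[|[|n]]]]]; simpl; auto.
      eapply inv_uniq; [| apply (proj2 (ev_winv k u1))].
      rewrite Hu1, <- p2 by (exact (ev_in j (Lt 2)) || exact (ev_in j (Lt 1))).
      rewrite ri_ra. exact Pid.
    - simpl. rewrite p2 by apply ev_in. congruence. }
  intros w. rewrite <- Hp. split.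
  - intros E. rewrite E. exact Pid.
  - intros E. apply p3; [apply ev_in | exact (ev_in j (Lt 0)) |]. rewrite E. auto.
Qed.

Fixpoint enc (w : W) : nat :=
  match w with
  | Lt n => Cantor.to_nat (0%nat, n)
  | Cm u v => Cantor.to_nat (S (enc u), enc v) end.

Lemma to_nat_inj a b : Cantor.to_nat a = Cantor.to_nat b -> a = b.
Proof. intros E. rewrite <- (cancel_of_to a), <- (cancel_of_to b), E. reflexivity. Qed.

Lemma enc_inj w w' : enc w = enc w' -> w = w'.
Proof.
  revert w'. induction w as [n | u IHu v IHv]; intros [n' | u' v'] E; cbn [enc] in E;
    apply to_nat_inj in E; inversion E; subst; auto.
  f_equal; auto.
Qed.

Lemma cantor (e : (nat -> bool) -> nat) : ~ (forall x y, e x = e y -> x = y).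
Proof.
  intros Hinj.
  set (g := fun n => epsilon (inhabits (fun _ : nat => false)) (fun f => e f = n)).
  set (d := fun n => negb (g n n)).
  assert (Hg : g (e d) = d).
  { apply Hinj. unfold g.
    apply (epsilon_spec (inhabits (fun _ : nat => false)) (fun f => e f = e d)). eauto. }
  assert (H : forall n, d n = negb (g n n)) by reflexivity.
  pose proof (f_equal (fun f => f (e d)) Hg) as H0. cbv beta in H0. rewrite H in H0.
  destruct (g (e d) (e d)); discriminate.
Qed.
From Stdlib Require Import Reals Lra Lia ZArith Arith Cantor.
From Stdlib Require Import FunctionalExtensionality ProofIrrelevance ClassicalEpsilon Classical PropExtensionality.
Open Scope R_scope.

Definition sbT (t : W) : W -> W :=
  match t with Cm u1 (Cm u2 u3) => sb u1 u2 u3 | _ => fun w => w end.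

Lemma Fb_closed b : forall f g, Fb b f -> Fb b g -> Fb b (compI f g).
Proof. intros; apply gen_comp; auto. Qed.

Theorem mainTheorem4 :
  exists (J : Type) (F : J -> fset),
    uncountable J /\
    (forall j, IET_3gen (F j) /\ derived_length_eq (F j) 3) /\
    (forall j k, j <> k -> ~ group_iso (F j) (F k)).
Proof.
  set (J := { P : fset -> Prop | exists b : nat -> bool, P = group_iso (Fb b) }).
  set (rep := fun P : J => proj1_sig (constructive_indefinite_description _ (proj2_sig P))).
  assert (rep_spec : forall P : J, proj1_sig P = group_iso (Fb (rep P))).
  { intros P. unfold rep. exact (proj2_sig (constructive_indefinite_description _ (proj2_sig P))). }
  exists J, (fun P => Fb (rep P)). split; [|split].
  - intros [e He].
    set (cls := fun b : nat -> bool => exist (fun P => exists b, P = group_iso (Fb b))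
                   (group_iso (Fb b)) (ex_intro _ b eq_refl) : J).
    assert (Hiso : forall b, group_iso (Fb b) (Fb (rep (cls b)))).
    { intros b. pose proof (rep_spec (cls b)) as E. simpl in E.
      rewrite E. apply iso_refl. }
    assert (Htri : forall b, exists t, forall w, ev b w = idI <-> ev (rep (cls b)) (sbT t w) = idI).
    { intros b. destruct (iso_kernel _ _ (Hiso b)) as (u1 & u2 & u3 & H).
      exists (Cm u1 (Cm u2 u3)). exact H. }
    set (tri := fun b => proj1_sig (constructive_indefinite_description _ (Htri b))).
    assert (tri_spec : forall b w, ev b w = idI <-> ev (rep (cls b)) (sbT (tri b) w) = idI).
    { intros b. unfold tri. exact (proj2_sig (constructive_indefinite_description _ (Htri b))). }
    apply (cantor (fun b => Cantor.to_nat (e (cls b), enc (tri b)))).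
    intros b b' E. apply to_nat_inj in E. injection E as E1 E2.
    apply He in E1. apply enc_inj in E2.
    apply kernel_inj. intros w. rewrite tri_spec, (tri_spec b' w), E1, E2. reflexivity.
  - intros P. split.
    + exists (ra (rep P)), ga, gc. split; [apply ra_IET|]. split; [apply ga_IET|].
      split; [apply gc_IET|]. intros f. reflexivity.
    + apply Fb_length.
  - intros P Q Hne Hiso. apply Hne.
    assert (E : proj1_sig P = proj1_sig Q).
    { rewrite !rep_spec. apply functional_extensionality; intros X.
      apply propositional_extensionality. split; intros H.
      - apply (iso_trans _ _ _ (iso_sym _ _ (Fb_closed _) Hiso) H).
      - apply (iso_trans _ _ _ Hiso H). }
    destruct P as [p hp], Q as [q hq]. simpl in E. subst q. f_equal. apply proof_irrelevance.
Qed.
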